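(* Let $p$ be a constant prime and let $F_n = GF(p^{r_n})$ be a sequence of finite fields. Given an element $x \in F_n$, it is possible to compute the multiplicative inverse of $x$ (when $x \neq 0$) in additional space $4 r_n + O(\log r_n)$, counting the space needed to store the irreducible polynomial used to represent $F_n$.
   Context: Elements of $GF(p^{r_n})$ are represented as polynomials over $GF(p)$ of degree less than $r_n$, with arithmetic performed modulo a fixed irreducible polynomial of degree $r_n$ over $GF(p)$. Space is measured on a deterministic space-bounded Turing machine. *)

(* Defs.v *)
From mathcomp Require Import all_boot all_algebra.
Set Implicit Arguments. Unset Strict Implicit. Unset Printing Implicit Defensive.
Import GRing.Theory.
Local Open Scope ring_scope.

Inductive move := MoveL | MoveN | MoveR.

Definition move_nat (m : move) (n : nat) : nat :=
  match m with MoveL => n.-1 | MoveN => n | MoveR => n.+1 end.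

(* A deterministic Turing machine with
   - a read-only two-way input tape over 'F_p with endmarkers (read as None),
   - [tm_tapes] work tapes whose cells hold elements of 'F_p
     (so one cell stores exactly one coefficient, no alphabet compression),
   - a write-only one-way output tape over 'F_p.
   A transition returning None means "halt". *)
Record TM (p : nat) := {
  tm_state : finType;
  tm_tapes : nat;
  tm_start : tm_state;
  tm_delta : tm_state -> option 'F_p -> ('I_tm_tapes -> 'F_p) ->
             option (tm_state * move * ('I_tm_tapes -> 'F_p * move) * option 'F_p)
}.

Record config (p : nat) (M : TM p) := {
  c_state : tm_state M;
  c_in : nat;
  c_tape : 'I_(tm_tapes M) -> nat -> 'F_p;
  c_pos : 'I_(tm_tapes M) -> nat;
  c_out : seq 'F_p
}.

(* The input tape for an element x of GF(p^r) (a polynomial of size <= r):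
   cell 0 and cell r+1 are endmarkers, cell i (1 <= i <= r) holds x`_(i-1). *)
Definition input_sym (p r : nat) (x : {poly 'F_p}) (i : nat) : option 'F_p :=
  if (0 < i <= r)%N then Some x`_(i.-1) else None.

Definition step (p : nat) (M : TM p) (r : nat) (x : {poly 'F_p})
  (c : config M) : option (config M) :=
  match tm_delta (c_state c) (input_sym r x (c_in c))
                 (fun j => c_tape c j (c_pos c j)) with
  | None => None
  | Some (s', mi, w, o) =>
      Some {| c_state := s';
              c_in := minn r.+1 (move_nat mi (c_in c));
              c_tape := fun j n => if n == c_pos c j then (w j).1 else c_tape c j n;
              c_pos := fun j => move_nat (w j).2 (c_pos c j);
              c_out := if o is Some a then rcons (c_out c) a else c_out c |}
  end.

(* Initial configuration: the irreducible polynomial f (monic, degree r) is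
   stored in the workspace: work tape 0 holds f`_0, ..., f`_(r-1) in cells
   0..r-1 (all other cells hold 0). *)
Definition init_config (p : nat) (M : TM p) (r : nat) (f : {poly 'F_p})
  : config M :=
  {| c_state := tm_start M;
     c_in := 0;
     c_tape := fun j n => if (val j == 0)%N && (n < r)%N then f`_n else 0;
     c_pos := fun _ => 0%N;
     c_out := [::] |}.

Fixpoint run (p : nat) (M : TM p) (r : nat) (f x : {poly 'F_p}) (t : nat)
  : option (config M) :=
  match t with
  | 0 => Some (init_config M r f)
  | t'.+1 => obind (step r x) (run M r f x t')
  end.

(* Main.v *)
Require Import Defs.
From HB Require Import structures.
From mathcomp Require Import all_boot all_algebra zify.
Set Implicit Arguments. Unset Strict Implicit. Unset Printing Implicit Defensive.
Import GRing.Theory.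
Local Open Scope ring_scope.

Section Machine.
Variable p : nat.
Local Notation F := 'F_p.

Inductive Q := RInc of bool | LC of bool & F & F & F & bool & F
  | RSh of F & F & bool | LChk of bool & F | ROut.

Definition ctag := ('I_5 * (F * F * F * F) * (bool * bool))%type.
Definition enc (q : Q) : ctag :=
  match q with
  | RInc b => (@Ordinal 5 0 isT, (0, 0, 0, 0), (b, false))
  | LC fs yi c xp mf yn => (@Ordinal 5 1 isT, (yi, c, xp, yn), (fs, mf))
  | RSh zp yn fin => (@Ordinal 5 2 isT, (zp, yn, 0, 0), (fin, false))
  | LChk a pv => (@Ordinal 5 3 isT, (pv, 0, 0, 0), (a, false))
  | ROut => (@Ordinal 5 4 isT, (0, 0, 0, 0), (false, false))
  end.
Definition dec (t : ctag) : option Q :=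
  let: (i, (a, b, c, d), (e, g)) := t in
  match val i with
  | 0 => Some (RInc e)
  | 1 => Some (LC e a b c g d)
  | 2 => Some (RSh a b e)
  | 3 => Some (LChk e a)
  | _ => Some ROut
  end.
Lemma encK : pcancel enc dec. Proof. by case. Qed.
HB.instance Definition _ := Finite.copy Q (pcan_type encK).

Definition act (q : Q) (sym : option F) (v0 v1 v2 v3 : F)
  : option (Q * F * F * F * option F) :=
  match q, sym with
  | RInc cy, Some _ =>
      Some (RInc (cy && (v1 == -1)), (if cy then v1 + 1 else v1), 0, 0, None)
  | RInc _, None => Some (LC true 0 0 0 true 0, v1, v2, v3, None)
  | LC fs yi c xp mf yn, Some a =>
      let c' := if fs then v2 else c in
      let zw := if fs then 0 else v2 - c * v0 + yi * xp in
      let: (mw, mf', yn') :=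
        if mf then (1, false, v1)
        else if v3 == 1 then (0, true, yn) else (v3, false, yn) in
      Some (LC false yi c' a mf' yn', v1, zw, mw, None)
  | LC fs yi c xp mf yn, None => Some (RSh (- (c * v0) + yi * xp) yn mf, v1, v2, v3, None)
  | RSh zp yn fin, Some _ => Some (RSh v2 yn fin, v1, zp, v3, None)
  | RSh zp yn fin, None =>
      Some ((if fin then LChk true 0 else LC true yn 0 0 false 0), v1, v2, v3, None)
  | LChk a pv, Some _ => Some (LChk (a && (pv == 0)) v2, v1, v2, v3, None)
  | LChk a pv, None =>
      Some ((if a && (pv == 1) then ROut else RInc true), v1, v2, v3, None)
  | ROut, Some _ => Some (ROut, v1, v2, v3, Some v1)
  | ROut, None => None
  end.

Definition mv (d : bool) := if d then MoveR else MoveL.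
Definition t0 : 'I_4 := @Ordinal 4 0 isT.
Definition t1 : 'I_4 := @Ordinal 4 1 isT.
Definition t2 : 'I_4 := @Ordinal 4 2 isT.
Definition t3 : 'I_4 := @Ordinal 4 3 isT.
Definition wsel (j : 'I_4) (w0 w1 w2 w3 : F) :=
  match val j with 0 => w0 | 1 => w1 | 2 => w2 | _ => w3 end.

Definition delta (s : bool * Q) (sym : option F) (v : 'I_4 -> F)
  : option ((bool * Q) * move * ('I_4 -> F * move) * option F) :=
  match act s.2 sym (v t0) (v t1) (v t2) (v t3) with
  | None => None
  | Some (q', w1, w2, w3, o) =>
      let d' := if sym is None then ~~ s.1 else s.1 in
      Some ((d', q'), mv d', (fun j => (wsel j (v t0) w1 w2 w3, mv d')), o)
  end.

Definition Mach : TM p :=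
  {| tm_state := (bool * Q)%type; tm_tapes := 4;
     tm_start := (false, LChk false 0); tm_delta := delta |}.

End Machine.

Section Sem.
Variables (p r : nat) (f x : {poly 'F_p}).
Hypothesis r_gt0 : (0 < r)%N.
Local Notation F := 'F_p.
Local Notation cfg := (config (Mach p)).
Local Notation stp := (@step p (Mach p) r x).

Fixpoint runc (c : cfg) n : option cfg :=
  match n with 0 => Some c | n'.+1 => obind stp (runc c n') end.

Lemma run_runc t : run (Mach p) r f x t = runc (init_config (Mach p) r f) t.
Proof. by elim: t => //= t ->. Qed.

Lemma runcD c n m : runc c (n + m) = obind (fun c' => runc c' m) (runc c n).
Proof.
elim: m => [|m IH]; first by rewrite addn0; case: (runc c n).
by rewrite addnS /= IH; case: (runc c n).
Qed.

Definition reach (c c' : cfg) := exists n, runc c n = Some c'.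

Lemma reach_trans a b c : reach a b -> reach b c -> reach a c.
Proof. by move=> [n Hn] [m Hm]; exists (n + m); rewrite runcD Hn. Qed.

Lemma reach_step a b : stp a = Some b -> reach a b.
Proof. by move=> H; exists 1%N. Qed.

Lemma reach_refl a : reach a a.
Proof. by exists 0%N. Qed.

Definition Inv (c : cfg) := [/\ (c_in c <= r.+1)%N, (forall j, c_pos c j = c_in c)
  & (c_in c = r.+1 -> (c_state c).1 = true)].

Lemma Inv_step c c' : Inv c -> stp c = Some c' -> Inv c'.
Proof.
case: c => [[d q] h tp ps o] [Hle Hpos Hend]; simpl in *.
rewrite /step /= /delta /=.
case: (act _ _ _ _ _ _) => [[[[[q' w1] w2] w3] oo]|] //= [<-] /=.
rewrite !Hpos.
have key : (move_nat (mv (if input_sym r x h is None then ~~ d else d)) h <= r.+1)%N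
   /\ (move_nat (mv (if input_sym r x h is None then ~~ d else d)) h = r.+1 ->
       (if input_sym r x h is None then ~~ d else d) = true).
  rewrite /input_sym; case: ifP => Hh.
    case/andP: Hh => Hh1 Hh2.
    case: d Hend => Hend /=; split=> //; try lia.
  have : (h == 0)%N || (h == r.+1).
    apply/orP; case: (posnP h) => [->|Hp]; [by left|right].
    by apply/eqP; apply/anti_leq; rewrite Hle /=; rewrite ltnNge; apply/negP => H; move/negbT: Hh; rewrite Hp H.
  case/orP=> /eqP Eh.
    by case: d {Hend} => /=; rewrite Eh /=; split=> // E; lia.
  by rewrite Eh (Hend Eh) /=; split=> // E; lia.
case: key => K1 K2; rewrite (minn_idPr K1); split=> //=; try exact K2; by move=> j; rewrite Hpos.
Qed.

Lemma Inv_init : Inv (init_config (Mach p) r f).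
Proof. by split. Qed.

Lemma Inv_runc c n c' : Inv c -> runc c n = Some c' -> Inv c'.
Proof.
elim: n c' => [|n IH] c' Hc /=; first by case=> <-.
case E: (runc c n) => [c1|] //= H; exact: Inv_step (IH _ Hc E) H.
Qed.


Definition fT n : F := if (n < r)%N then f`_n else 0.
Definition upd (Y : nat -> F) h w := fun n => if n == h then w else Y n.
Definition addo (O : seq F) (o : option F) := if o is Some a then rcons O a else O.

Definition Conf (c : cfg) h d q (Y Z Mk : nat -> F) O :=
 [/\ c_state c = (d, q), c_in c = h, (forall j, c_pos c j = h),
     (forall n, c_tape c t0 n = fT n) &
     (forall n, (0 < n <= r)%N ->
        [/\ c_tape c t1 n = Y n, c_tape c t2 n = Z n & c_tape c t3 n = Mk n])]
   /\ c_out c = O.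

Lemma Conf_ext c h d q Y Z Mk O Y' Z' Mk' :
  Conf c h d q Y Z Mk O ->
  (forall n, (0 < n <= r)%N -> [/\ Y n = Y' n, Z n = Z' n & Mk n = Mk' n]) ->
  Conf c h d q Y' Z' Mk' O.
Proof.
case=> [[H1 H2 H3 H4 H5] H6] He; split=> //; split=> // n Hn.
by have [-> -> ->] := H5 n Hn; have [-> -> ->] := He n Hn.
Qed.

Lemma Conf_hq c h d q Y Z Mk O h' q' :
  Conf c h d q Y Z Mk O -> h = h' -> q = q' -> Conf c h' d q' Y Z Mk O.
Proof. by move=> H <- <-. Qed.

Lemma Conf_O c h d q Y Z Mk O O' :
  Conf c h d q Y Z Mk O -> O = O' -> Conf c h d q Y Z Mk O'.
Proof. by move=> H <-. Qed.

Lemma upd_id (Y : nat -> F) h n : upd Y h (Y h) n = Y n.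
Proof. by rewrite /upd; case: eqP => // ->. Qed.

Lemma step_in c h d q Y Z Mk O q' w1 w2 w3 o :
  Conf c h d q Y Z Mk O -> (0 < h <= r)%N ->
  act q (Some x`_h.-1) (fT h) (Y h) (Z h) (Mk h) = Some (q', w1, w2, w3, o) ->
  exists c', stp c = Some c' /\
    Conf c' (if d then h.+1 else h.-1) d q' (upd Y h w1) (upd Z h w2) (upd Mk h w3)
      (addo O o).
Proof.
case: c => [s h0 tp ps oc] [[/= -> -> Hpos Ht0 Ht] Ho] Hh Hact.
rewrite /step /= /delta /= !Hpos Ht0.
have [T1 T2 T3] := Ht h Hh.
rewrite T1 T2 T3 /input_sym Hh Hact /=.
eexists; split; first reflexivity.
split; [split=> //= | ].
- by case/andP: Hh => A B; case: d {Hact} => /=; apply/minn_idPr; lia.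
- by move=> j; rewrite Hpos; case: d {Hact}.
- by move=> n; rewrite Hpos Ht0; case: ifP => // /eqP ->.
- move=> n Hn; have [U1 U2 U3] := Ht n Hn; rewrite !Hpos /upd U1 U2 U3.
  by case: ifP.
- by rewrite Ho.
Qed.

Lemma step_turnR c q Y Z Mk O q' o :
  Conf c r.+1 true q Y Z Mk O ->
  (forall v0 v1 v2 v3, exists w1 w2 w3, act q None v0 v1 v2 v3 = Some (q', w1, w2, w3, o)) ->
  exists c', stp c = Some c' /\ Conf c' r false q' Y Z Mk (addo O o).
Proof.
case: c => [s h0 tp ps oc] [[/= -> -> Hpos Ht0 Ht] Ho] Hact.
rewrite /step /= /delta /= !Hpos.
have -> : input_sym r x r.+1 = None by rewrite /input_sym ltnn andbF.
have [w1 [w2 [w3 ->]]] := Hact (tp t0 r.+1) (tp t1 r.+1) (tp t2 r.+1) (tp t3 r.+1).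
eexists; split; first reflexivity.
split; [split=> //= | ].
- by apply/minn_idPr.
- by move=> j; rewrite Hpos.
- by move=> n; rewrite Hpos Ht0; case: ifP => // /eqP ->.
- move=> n Hn; have [U1 U2 U3] := Ht n Hn; rewrite !Hpos.
  have -> : (n == r.+1) = false by apply/negbTE; case/andP: Hn => A B; lia.
  by [].
- by rewrite Ho.
Qed.

Lemma step_turnL c q Y Z Mk O q' o :
  Conf c 0 false q Y Z Mk O ->
  (forall v1 v2 v3, exists w1 w2 w3, act q None (fT 0) v1 v2 v3 = Some (q', w1, w2, w3, o)) ->
  exists c', stp c = Some c' /\ Conf c' 1 true q' Y Z Mk (addo O o).
Proof.
case: c => [s h0 tp ps oc] [[/= -> -> Hpos Ht0 Ht] Ho] Hact.
rewrite /step /= /delta /= !Hpos.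
have -> : input_sym r x 0 = None by [].
rewrite Ht0.
have [w1 [w2 [w3 ->]]] := Hact (tp t1 0) (tp t2 0) (tp t3 0).
eexists; split; first reflexivity.
split; [split=> //= | ].
- by move=> j; rewrite Hpos.
- by move=> n; rewrite Hpos Ht0; case: ifP => // /eqP ->.
- move=> n Hn; have [U1 U2 U3] := Ht n Hn; rewrite !Hpos.
  have -> : (n == 0) = false by apply/negbTE; case/andP: Hn => A B; lia.
  by [].
- by rewrite Ho.
Qed.

Lemma step_halt c Y Z Mk O : Conf c r.+1 true (ROut p) Y Z Mk O -> stp c = None.
Proof.
case: c => [s h0 tp ps oc] [[/= -> -> Hpos Ht0 Ht] Ho].
rewrite /step /= /delta /= !Hpos.
by have -> : input_sym r x r.+1 = None by rewrite /input_sym ltnn andbF.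
Qed.

Lemma iterate (P : nat -> cfg -> Prop) n :
  (forall k c, (k < n)%N -> P k c -> exists c', stp c = Some c' /\ P k.+1 c') ->
  forall c, P 0%N c -> exists c', reach c c' /\ P n c'.
Proof.
move=> Hs c H0.
suff : forall k, (k <= n)%N -> exists c', reach c c' /\ P k c' by apply.
elim=> [|k IH] Hk; first by exists c; split=> //; apply: reach_refl.
have [c1 [R1 P1]] := IH (ltnW Hk).
have [c2 [S2 P2]] := Hs k c1 Hk P1.
by exists c2; split=> //; apply: reach_trans R1 (reach_step S2).
Qed.

End Sem.

Section Phases.
Variables (p r : nat) (f x : {poly 'F_p}).
Hypothesis r_gt0 : (0 < r)%N.
Hypothesis Hf : size f = r.+1.
Hypothesis Hfm : f \is monic.
Hypothesis Hx : (size x <= r)%N.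
Local Notation F := 'F_p.
Local Notation cfg := (config (Mach p)).
Local Notation stp := (@step p (Mach p) r x).
Local Notation Conf := (Conf r f).
Local Notation reach := (reach r x).

Definition Ys (s : seq F) n := nth 0 s n.-1.
Definition Zp (z : {poly F}) n := z`_n.-1.
Definition Mm (m n : nat) : F := (n == m)%:R.

Fixpoint inc (cy : bool) (s : seq F) : seq F :=
  match s with
  | [::] => [::]
  | a :: s' => (if cy then a + 1 else a) :: inc (cy && (a == -1)) s'
  end.
Fixpoint carr (cy : bool) (s : seq F) k {struct k} : bool :=
  match k with
  | 0 => cy
  | k'.+1 => if s is a :: s' then carr (cy && (a == -1)) s' k' else cy
  end.

Lemma size_inc cy s : size (inc cy s) = size s.
Proof. by elim: s cy => //= a s IH cy; rewrite IH. Qed.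

Lemma nth_inc cy s k : (k < size s)%N ->
  nth 0 (inc cy s) k = if carr cy s k then nth 0 s k + 1 else nth 0 s k.
Proof.
elim: s cy k => //= a s IH cy [|k] Hk /=; first by case: s {IH Hk}.
by rewrite IH.
Qed.

Lemma carrS cy s k : (k < size s)%N -> carr cy s k.+1 = carr cy s k && (nth 0 s k == -1).
Proof.
elim: s cy k => //= a s IH cy [|k] Hk /=; first by case: s {IH Hk}.
by rewrite IH.
Qed.

Lemma rinc_sweep s Z Mk O c : size s = r ->
  Conf c 1 true (RInc p true) (Ys s) Z Mk O ->
  exists c', reach c c' /\
    Conf c' r.+1 true (RInc p (carr true s r)) (Ys (inc true s)) (fun _ => 0) (fun _ => 0) O.
Proof.
move=> Hs Hc.
pose P k c := Conf c k.+1 true (RInc p (carr true s k))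
  (fun n => if (n <= k)%N then nth 0 (inc true s) n.-1 else Ys s n)
  (fun n => if (n <= k)%N then 0 else Z n) (fun n => if (n <= k)%N then 0 else Mk n) O.
have := @iterate p r x P r _ c.
case.
- move=> k c1 Hk HP.
  have Hh : (0 < k.+1 <= r)%N by [].
  have [c2 [S2 C2]] := step_in r_gt0 (x:=x) HP Hh (erefl _).
  exists c2; split => //; rewrite /P.
  move: C2; rewrite ltnn /Ys /= -carrS ?Hs // => C2.
  eapply Conf_ext; [exact C2|] => n Hn.
  rewrite /upd; case: eqP => [->|Hne].
    by rewrite leqnn /= nth_inc ?Hs.
  have -> : (n <= k.+1)%N = (n <= k)%N by rewrite leq_eqVlt ltnS; move/eqP/negbTE: Hne => ->.
  by [].
- by rewrite /P /=; eapply Conf_ext; [exact Hc|] => n /andP [Hn1 Hn2]; rewrite leqNgt Hn1.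
- move=> c' [R' P']; exists c'; split => //.
  by eapply Conf_ext; [exact P'|] => n /andP [Hn1 Hn2]; rewrite Hn2.
Qed.


Definition zz (z : {poly F}) (yi : F) := z * 'X - z`_r.-1 *: f + yi *: x.

Lemma coef_zz z yi n :
  (zz z yi)`_n = (if n == 0%N then 0 else z`_n.-1) - z`_r.-1 * f`_n + yi * x`_n.
Proof. by rewrite /zz coefD coefB coefMX !coefZ. Qed.

Lemma f_r : f`_r = 1.
Proof. by move/monicP: Hfm; rewrite lead_coefE Hf. Qed.

Lemma x_r : x`_r = 0.
Proof. exact: nth_default. Qed.

Lemma zz_r z yi : (zz z yi)`_r = 0.
Proof.
rewrite coef_zz f_r x_r mulr0 addr0 mulr1.
have -> : (r == 0%N) = false by apply/negbTE; rewrite -lt0n.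
by rewrite subrr.
Qed.

Lemma Mm_eq1 m h : (Mm m h == 1) = (h == m).
Proof. by rewrite /Mm; case: (h == m); rewrite ?eqxx // eq_sym oner_eq0. Qed.

Lemma act_LC fs (yi c xp : F) mf (yn a v0 v1 v2 v3 : F) :
  act (LC fs yi c xp mf yn) (Some a) v0 v1 v2 v3 =
  Some (LC false yi (if fs then v2 else c) a (if mf then false else v3 == 1)
          (if mf then v1 else yn), v1,
        (if fs then 0 else v2 - c * v0 + yi * xp),
        (if mf then 1 else if v3 == 1 then 0 else v3), None).
Proof. by rewrite /=; case: mf => //; case: (v3 == 1). Qed.

Lemma lc_sweep s z m O c0 : size s = r -> (0 < m <= r.+1)%N ->
  Conf c0 r false (LC true (nth 0 s m.-1) 0 0 (m == r.+1) 0) (Ys s) (Zp z) (Mm m) O ->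
  exists c1 (yn : F), reach c0 c1 /\
    Conf c1 0 false (LC false (nth 0 s m.-1) z`_r.-1 x`_0 (m == 1)%N yn) (Ys s)
      (fun n => (zz z (nth 0 s m.-1))`_n) (Mm m.-1) O /\ ((1 < m)%N -> yn = nth 0 s m.-2).
Proof.
move=> Hs Hm Hc.
set yi := nth 0 s m.-1; set c := z`_r.-1.
pose P k c1 := exists yn, Conf c1 (r - k) false
   (LC (k == 0%N) yi (if k == 0%N then 0 else c) x`_(r - k) (m == (r - k).+1) yn) (Ys s)
   (fun n => if (r - k < n)%N then (zz z yi)`_n else Zp z n)
   (fun n => if (r - k < n)%N then Mm m.-1 n else Mm m n) O
   /\ (((r - k).+1 < m)%N -> yn = nth 0 s m.-2).
have := @iterate p r x P r _ c0.
case.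
- move=> k c1 Hk [yn [C1 Hyn]].
  have Hh : (0 < r - k <= r)%N by apply/andP; split; lia.
  have [c2 [S2 C2]] := step_in r_gt0 (x:=x) C1 Hh (act_LC _ _ _ _ _ _ _ _ _ _ _).
  exists c2; split => //.
  have E1 : (r - k).-1 = (r - k.+1)%N by lia.
  exists (if m == (r - k).+1 then Ys s (r - k) else yn); split.
  + eapply Conf_hq; first eapply Conf_ext; first exact C2.
    * move=> n /andP [Hn1 Hn2]; rewrite /upd; case: eqP => [En|Hne].
      - rewrite En; split => //.
        + have -> : (r - k.+1 < r - k)%N = true by lia.
          case: eqP => [Ek|Nk]; first by rewrite Ek subn0 zz_r.
          rewrite ltnn /Zp /fT coef_zz.
          have -> : (r - k < r)%N = true by apply/idP; lia.
          have -> : (r - k == 0)%N = false by apply/negbTE; lia.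
          by [].
        + have -> : (r - k.+1 < r - k)%N = true by lia.
          rewrite ltnn Mm_eq1 /Mm.
          case: eqP => [Em|Nm].
            by rewrite Em /= eqxx.
          case: eqP => [Ehm|Nhm].
            by have -> : (r - k == m.-1)%N = false by apply/negbTE; lia.
          by have -> : (r - k == m.-1)%N = false by apply/negbTE; lia.
      - have -> : (r - k.+1 < n)%N = (r - k < n)%N by apply/idP/idP; lia.
        by [].
    * by [].
    * rewrite /= E1; congr LC.
      - by case: eqP => [Ek|//]; rewrite /Zp Ek subn0 ltnn.
      - rewrite /= ltnn Mm_eq1.
        case: eqP => [Em|Nm].
          by apply/esym/eqP; lia.
        by apply/idP/idP => /eqP H; apply/eqP; lia.
  + move=> Hlt; case: eqP => [Em|Nm].
      by rewrite /Ys Em.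
    by apply: Hyn; lia.
- exists 0; split; last by move=> H; lia.
  rewrite subn0 x_r /=.
  eapply Conf_ext; first exact Hc.
  by move=> n /andP [Hn1 Hn2]; rewrite ltnNge Hn2.
- move=> c1 [R1 [yn [C1 Hyn]]]; exists c1, yn; split => //; split.
  eapply Conf_hq; first eapply Conf_ext; first exact C1.
  + by move=> n /andP [Hn1 Hn2]; rewrite subnn Hn1.
  + by rewrite subnn.
  + have -> : (r == 0%N) = false by apply/negbTE; rewrite -lt0n.
    by rewrite subnn.
  + by move=> H; apply: Hyn; rewrite subnn.
Qed.


Lemma rsh_sweep (w : {poly F}) (yn : F) fin Y Mk O c0 :
  Conf c0 1 true (RSh w`_0 yn fin) Y (fun n => w`_n) Mk O ->
  exists c1, reach c0 c1 /\ Conf c1 r.+1 true (RSh w`_r yn fin) Y (Zp w) Mk O.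
Proof.
move=> Hc.
pose P k c := Conf c k.+1 true (RSh w`_k yn fin) Y
  (fun n => if (n <= k)%N then w`_n.-1 else w`_n) Mk O.
have := @iterate p r x P r _ c0.
case.
- move=> k c1 Hk C1.
  have Hh : (0 < k.+1 <= r)%N by [].
  have [c2 [S2 C2]] := step_in r_gt0 (x:=x) C1 Hh (erefl _).
  exists c2; split => //.
  eapply Conf_hq; first eapply Conf_ext; first exact C2.
  + move=> n Hn; rewrite upd_id; split => //.
      rewrite /upd; case: eqP => [->|Hne]; first by rewrite leqnn.
      have -> : (n <= k.+1)%N = (n <= k)%N by apply/idP/idP; lia.
      by [].
    by rewrite upd_id.
  + by [].
  + by rewrite /= ltnn.
- by eapply Conf_ext; first exact Hc; move=> n /andP [Hn1 Hn2]; rewrite leqNgt Hn1.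
- move=> c1 [R1 C1]; exists c1; split => //.
  by eapply Conf_ext; first exact C1; move=> n /andP [Hn1 Hn2]; rewrite Hn2.
Qed.

Lemma lchk_sweep (z : {poly F}) Y Mk O c0 : (size z <= r)%N ->
  Conf c0 r false (LChk true 0) Y (Zp z) Mk O ->
  exists c1, reach c0 c1 /\
    Conf c1 0 false (LChk (all (fun i => z`_i == 0) (iota 1 r)) z`_0) Y (Zp z) Mk O.
Proof.
move=> Hz Hc.
pose P k c := Conf c (r - k) false
  (LChk (all (fun i => z`_i == 0) (iota (r - k).+1 k)) z`_(r - k)) Y (Zp z) Mk O.
have := @iterate p r x P r _ c0.
case.
- move=> k c1 Hk C1.
  have Hh : (0 < r - k <= r)%N by apply/andP; split; lia.
  have [c2 [S2 C2]] := step_in r_gt0 (x:=x) C1 Hh (erefl _).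
  exists c2; split => //.
  eapply Conf_hq; first eapply Conf_ext; first exact C2.
  + by move=> n Hn; rewrite !upd_id.
  + by lia.
  + have E : (r - k.+1).+1 = (r - k)%N by lia.
    by rewrite E /= andbC /Zp; congr (LChk _ _); congr (z`_ _); lia.
- by eapply Conf_hq; first exact Hc; rewrite ?subn0 //= nth_default.
- move=> c1 [R1 C1]; exists c1; split => //.
  by eapply Conf_hq; first exact C1; rewrite ?subnn.
Qed.

Lemma check_ok (z : {poly F}) : (size z <= r)%N ->
  (all (fun i => z`_i == 0) (iota 1 r) && (z`_0 == 1)) = (z == 1).
Proof.
move=> Hz; apply/idP/eqP.
- case/andP=> /allP Ha /eqP H0; apply/polyP => i; rewrite coef1.
  case: i => [|i] //=.
  case: (leqP i.+1 r) => Hi.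
    by apply/eqP; apply: Ha; rewrite mem_iota; lia.
  by rewrite (nth_default 0 (leq_trans Hz (ltnW Hi))).
- move=> ->; rewrite coef1 eqxx andbT; apply/allP => i; rewrite mem_iota coef1.
  by case: i.
Qed.

Lemma rout_sweep s Z Mk c0 : size s = r ->
  Conf c0 1 true (ROut p) (Ys s) Z Mk [::] ->
  exists c1, reach c0 c1 /\ Conf c1 r.+1 true (ROut p) (Ys s) Z Mk s.
Proof.
move=> Hs Hc.
pose P k c := Conf c k.+1 true (ROut p) (Ys s) Z Mk (take k s).
have := @iterate p r x P r _ c0.
case.
- move=> k c1 Hk C1.
  have Hh : (0 < k.+1 <= r)%N by [].
  have [c2 [S2 C2]] := step_in r_gt0 (x:=x) C1 Hh (erefl _).
  exists c2; split => //.
  eapply Conf_O; first eapply Conf_ext; first exact C2.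
  + by move=> n Hn; rewrite !upd_id.
  + by rewrite /= (take_nth 0) ?Hs.
- by eapply Conf_O; first exact Hc; rewrite take0.
- move=> c1 [R1 C1]; exists c1; split => //.
  by eapply Conf_O; first exact C1; rewrite take_oversize ?Hs.
Qed.

Lemma horner_iter s z m O c0 : size s = r -> (0 < m <= r.+1)%N ->
  Conf c0 r false (LC true (nth 0 s m.-1) 0 0 (m == r.+1) 0) (Ys s) (Zp z) (Mm m) O ->
  exists c1, reach c0 c1 /\
   (if m == 1%N then
      Conf c1 r false (LChk true 0) (Ys s) (Zp (zz z (nth 0 s m.-1))) (fun _ => 0) O
    else Conf c1 r false (LC true (nth 0 s m.-2) 0 0 false 0) (Ys s)
           (Zp (zz z (nth 0 s m.-1))) (Mm m.-1) O).
Proof.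
move=> Hs Hm Hc.
have [c1 [yn [R1 [C1 Hyn]]]] := lc_sweep Hs Hm Hc.
set w := zz z (nth 0 s m.-1) in C1 *.
have [c2 [S2 C2]] : exists c2, stp c1 = Some c2 /\
    Conf c2 1 true (RSh w`_0 yn (m == 1)%N) (Ys s) (fun n => w`_n) (Mm m.-1) O.
  apply: (step_turnL x r_gt0 (o:=None) C1) => v1 v2 v3; do 3 eexists.
  by rewrite /= /fT r_gt0 /w coef_zz /= add0r.
have [c3 [R3 C3]] := rsh_sweep C2.
have [c4 [S4 C4]] : exists c4, stp c3 = Some c4 /\
    Conf c4 r false (if (m == 1)%N then LChk true 0 else LC true yn 0 0 false 0)
      (Ys s) (Zp w) (Mm m.-1) O.
  by apply: (step_turnR x r_gt0 (o:=None) C3) => v0 v1 v2 v3; do 3 eexists.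
exists c4; split.
  apply: reach_trans R1 _; apply: reach_trans (reach_step S2) _.
  by apply: reach_trans R3 (reach_step S4).
case: eqP C4 => [Em|Nm] C4.
  by eapply Conf_ext; first exact C4; move=> n /andP [Hn1 Hn2]; split => //; rewrite /Mm Em; case: n Hn1 Hn2.
rewrite Hyn in C4; first by [].
by case/andP: Hm => Hm1 _; lia.
Qed.


Lemma f_neq0 : f != 0.
Proof. by rewrite -size_poly_gt0 Hf. Qed.

Definition zm s m := x * Poly (drop m s) %% f.

Lemma size_modf (q : {poly F}) : (size (q %% f)%R <= r)%N.
Proof. by rewrite -ltnS -Hf ltn_modpN0 // f_neq0. Qed.

Lemma size_zz (z : {poly F}) (yi : F) : (size z <= r)%N -> (size (zz z yi) <= r)%N.
Proof.
move=> Hz; apply/leq_sizeP => j Hj.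
case: (ltngtP j r) => Hjr; first by lia.
  rewrite coef_zz (nth_default 0 (_ : size z <= j.-1)%N); last by lia.
  rewrite (nth_default 0 (_ : size f <= j)%N); last by rewrite Hf.
  rewrite (nth_default 0 (_ : size x <= j)%N); last by lia.
  by rewrite if_same mulr0 subr0 mulr0 addr0.
by rewrite Hjr zz_r.
Qed.

Lemma zz_step s m : size s = r -> (0 < m <= r.+1)%N ->
  zz (zm s m) (nth 0 s m.-1) = zm s m.-1.
Proof.
move=> Hs /andP [Hm1 Hm2].
set z := zm s m; set yi := nth 0 s m.-1.
have Hz : (size z <= r)%N by apply: size_modf.
rewrite -(modp_small (_ : size (zz z yi) < size f)%N); last by rewrite Hf ltnS size_zz.
have -> : zz z yi = (z * 'X + yi *: x) + (- z`_r.-1) *: f.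
  by rewrite /zz scaleNr addrAC.
rewrite modpD modpZl modpp scaler0 addr0.
have EP : Poly (drop m.-1 s) = Poly (drop m s) * 'X + yi%:P.
  case: (ltnP m.-1 (size s)) => Hms.
    by rewrite (drop_nth 0 Hms) prednK //= cons_poly_def.
  have D1 : drop m.-1 s = [::] by apply: drop_oversize; lia.
  have D2 : drop m s = [::] by apply: drop_oversize; lia.
  by rewrite D1 D2 /yi nth_default //= mul0r add0r.
rewrite /zm EP mulrDr mulrA -[x * yi%:P]mulrC mul_polyC.
rewrite modpD [in RHS]modpD; congr (_ + _).
by rewrite /z /zm mulrC modp_mul mulrC.
Qed.

Lemma zm_top s : size s = r -> zm s r.+1 = 0.
Proof. by move=> Hs; rewrite /zm drop_oversize ?Hs // mulr0 mod0p. Qed.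

Lemma zm_0 s : zm s 0 = x * Poly s %% f.
Proof. by rewrite /zm drop0. Qed.

End Phases.

Section Final.
Variables (p r : nat) (f x : {poly 'F_p}).
Hypothesis r_gt0 : (0 < r)%N.
Hypothesis Hf : size f = r.+1.
Hypothesis Hfm : f \is monic.
Hypothesis Hx : (size x <= r)%N.
Local Notation F := 'F_p.
Local Notation cfg := (config (Mach p)).
Local Notation stp := (@step p (Mach p) r x).
Local Notation Conf := (Conf r f).
Local Notation reach := (reach r x).
Local Notation zm := (zm f x).

Lemma horner_chain s O c0 : size s = r ->
  Conf c0 r false (LC true 0 0 0 true 0) (Ys s) (fun _ => 0) (fun _ => 0) O ->
  exists c1, reach c0 c1 /\
    Conf c1 r false (LChk true 0) (Ys s) (Zp (zm s 0)) (fun _ => 0) O.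
Proof.
move=> Hs Hc.
pose H m c := Conf c r false (LC true (nth 0 s m.-1) 0 0 (m == r.+1) 0) (Ys s)
   (Zp (zm s m)) (Mm p m) O.
have claim : forall k, (k <= r)%N -> exists c1, reach c0 c1 /\ H (r.+1 - k)%N c1.
  elim=> [|k IH] Hk.
    exists c0; split; first exact: reach_refl.
    rewrite /H subn0 eqxx (nth_default 0 (_ : size s <= r.+1.-1)%N) ?Hs //.
    eapply Conf_ext; first exact Hc.
    move=> n /andP [Hn1 Hn2]; split => //.
      by rewrite /Zp zm_top // coef0.
    by rewrite /Mm; have -> : (n == r.+1) = false by apply/negbTE; lia.
  have [c1 [R1 H1]] := IH (ltnW Hk).
  have Hm : (0 < r.+1 - k <= r.+1)%N by apply/andP; split; lia.
  have [c2 [R2 C2]] := horner_iter r_gt0 Hf Hfm Hx Hs Hm H1.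
  rewrite (_ : (r.+1 - k == 1)%N = false) in C2; last by apply/negbTE; lia.
  rewrite zz_step // in C2.
  have E : ((r.+1 - k).-1 = r.+1 - k.+1)%N by lia.
  rewrite E in C2.
  exists c2; split; first exact: reach_trans R1 R2.
  eapply Conf_hq; first exact C2; first by [].
  by have -> : (r.+1 - k.+1 == r.+1)%N = false by apply/negbTE; lia.
have [c1 [R1 H1]] := claim r (leqnn r).
rewrite /H subSnn in H1.
have [c2 [R2 C2]] := horner_iter r_gt0 Hf Hfm Hx Hs (isT : (0 < 1 <= r.+1)%N) H1.
rewrite /= zz_step // in C2.
by exists c2; split; first exact: reach_trans R1 R2.
Qed.

Definition Aconf s c := exists a pv Z,
  Conf c 0 false (LChk a pv) (Ys s) Z (fun _ => 0) [::] /\ ~~ (a && (pv == 1)).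

Definition success (c : cfg) :=
  [/\ stp c = None, size (c_out c) = r & (x * Poly (c_out c)) %% f = 1].

Lemma round s c0 : size s = r -> Aconf s c0 ->
  (x * Poly (inc true s) %% f == 1 -> exists c, reach c0 c /\ success c) /\
  (x * Poly (inc true s) %% f != 1 -> exists c, reach c0 c /\ Aconf (inc true s) c).
Proof.
move=> Hs [a [pv [Z [C0 Hok]]]].
have [c1 [S1 C1]] : exists c1, stp c0 = Some c1 /\
    Conf c1 1 true (RInc p true) (Ys s) Z (fun _ => 0) [::].
  apply: (step_turnL x r_gt0 (o:=None) C0) => v1 v2 v3; do 3 eexists.
  by rewrite /= (negbTE Hok).
have [c2 [R2 C2]] := rinc_sweep x r_gt0 Hs C1.
have [c3 [S3 C3]] : exists c3, stp c2 = Some c3 /\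
    Conf c3 r false (LC true 0 0 0 true 0) (Ys (inc true s)) (fun _ => 0) (fun _ => 0) [::].
  by apply: (step_turnR x r_gt0 (o:=None) C2) => v0 v1 v2 v3; do 3 eexists.
have Hs' : size (inc true s) = r by rewrite size_inc.
have [c4 [R4 C4]] := horner_chain Hs' C3.
have [c5 [R5 C5]] := lchk_sweep r_gt0 Hf Hfm Hx (size_modf Hf _) C4.
have R05 : reach c0 c5.
  apply: reach_trans (reach_step S1) _; apply: reach_trans R2 _.
  by apply: reach_trans (reach_step S3) _; apply: reach_trans R4 R5.
rewrite drop0 in C5.
set z := x * Poly (inc true s) %% f in C5 *.
have Hck := check_ok r_gt0 Hf Hfm Hx (size_modf Hf (x * Poly (inc true s))).
rewrite -/z in Hck.
split => Hz.
- have [c6 [S6 C6]] : exists c6, stp c5 = Some c6 /\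
      Conf c6 1 true (ROut p) (Ys (inc true s)) (Zp z) (fun _ => 0) [::].
    apply: (step_turnL x r_gt0 (o:=None) C5) => v1 v2 v3; do 3 eexists.
    by rewrite /= Hck Hz.
  have [c7 [R7 C7]] := rout_sweep x r_gt0 Hs' C6.
  exists c7; split.
    by apply: reach_trans R05 _; apply: reach_trans (reach_step S6) R7.
  case: C7 => [[Cst Cin Cpos Ct0 Ct] Co]; split.
  + by apply: (step_halt x (Y:=Ys (inc true s)) (Z:=Zp z) (Mk:=fun _ => 0) (O:=inc true s)).
  + by rewrite Co.
  + by rewrite Co; apply/eqP.
- exists c5; split => //.
  by exists (all (fun i => z`_i == 0) (iota 1 r)), z`_0, (Zp z); split => //; rewrite Hck.
Qed.

End Final.

Section Enum.
Variable p : nat.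
Hypothesis p_pr : prime p.
Local Notation F := 'F_p.

Lemma inc_false (s : seq F) : inc false s = s.
Proof. by elim: s => //= a s ->. Qed.

Lemma iter_head j (s : seq F) : (j < p)%N -> iter j (inc true) (0 :: s) = j%:R :: s.
Proof.
elim: j => [|j IH] Hj //=.
rewrite IH ?(ltnW Hj) //=.
have Hn : (j%:R == -1 :> F) = false.
  rewrite -addr_eq0 natr1 -(dvdn_pcharf (pchar_Fp p_pr)).
  by apply: gtnNdvd.
by rewrite Hn inc_false natr1.
Qed.

Lemma iter_p (s : seq F) : iter p (inc true) (0 :: s) = 0 :: inc true s.
Proof.
have Hp := prime_gt0 p_pr.
transitivity (iter p.-1.+1 (inc true) (0 :: s)); first by rewrite prednK.
rewrite iterS iter_head ?prednK // /=.
have -> : ((p.-1)%:R == -1 :> F) = true.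
  by rewrite -addr_eq0 natr1 prednK // pchar_Fp_0.
by rewrite natr1 prednK // pchar_Fp_0.
Qed.

Lemma iter_pk k (s : seq F) : iter (k * p) (inc true) (0 :: s) = 0 :: iter k (inc true) s.
Proof. by elim: k => //= k IH; rewrite mulSn iterD IH iter_p. Qed.

Lemma enum_all (t : seq F) : exists k, iter k (inc true) (nseq (size t) 0) = t.
Proof.
elim: t => [|b t [k Hk]]; first by exists 0%N.
exists (nat_of_ord b + k * p)%N.
have Hb : (nat_of_ord b < p)%N by have := ltn_ord b; have := Fp_cast p_pr; lia.
by rewrite iterD /= iter_pk Hk iter_head // natr_Zp.
Qed.

Lemma size_iter_inc j (s : seq F) : size (iter j (inc true) s) = size s.
Proof. by elim: j => //= j IH; rewrite size_inc IH. Qed.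

End Enum.

Lemma inv_exists p r (f x : {poly 'F_p}) : (0 < r)%N -> size f = r.+1 -> irreducible_poly f ->
  (size x <= r)%N -> x != 0 ->
  exists y : {poly 'F_p}, (size y <= r)%N /\ x * y %% f = 1.
Proof.
move=> Hr Hf Hirr Hx Hx0.
have Hcop : coprimep f x.
  rewrite irreducible_poly_coprime //; apply/negP => Hd.
  by have := leq_trans (dvdp_leq Hx0 Hd) Hx; rewrite Hf ltnn.
case/Bezout_eq1_coprimepP: Hcop => [[u v]] /= Huv.
exists (v %% f); split; first exact: size_modf.
rewrite modp_mul mulrC.
have H1 : (u * f + v * x) %% f = 1 %% f by rewrite Huv.
move: H1; rewrite modpD.
rewrite modp_mull add0r => ->.
by apply: modp_small; rewrite size_poly1 Hf.
Qed.

Theorem lemmaB6 :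
  forall p : nat, prime p ->
  exists (M : TM p) (C : nat),
  forall (r : nat) (f x : {poly 'F_p}),
    (0 < r)%N -> size f = r.+1 -> f \is monic -> irreducible_poly f ->
    (size x <= r)%N -> x != 0 ->
    exists (t : nat) (c : config M) (b : 'I_(tm_tapes M) -> nat),
      [/\ (run M r f x t = Some c /\ step r x c = None),
          (size (c_out c) = r /\ (x * Poly (c_out c)) %% f = 1),
          (forall s c', (s <= t)%N -> run M r f x s = Some c' ->
             forall j, (c_pos c' j < b j)%N),
          (forall j : 'I_(tm_tapes M), val j = 0%N -> (r <= b j)%N) &
          (\sum_(j < tm_tapes M) b j <= 4 * r + C * trunc_log 2 r + C)%N].
Proof.
move=> p Hp; exists (Mach p), 8%N => r f x Hr Hf Hfm Hirr Hx Hx0.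
have [y [Hy Hxy]] := inv_exists Hr Hf Hirr Hx Hx0.
pose sstar := mkseq (fun i => y`_i) r.
have Hss : size sstar = r by rewrite size_mkseq.
have HPoly : Poly sstar = y.
  apply/polyP => i; rewrite coef_Poly.
  case: (ltnP i r) => Hi; first by rewrite nth_mkseq.
  by rewrite !nth_default ?Hss //; apply: leq_trans Hy Hi.
have [k Hk] := enum_all Hp sstar.
rewrite Hss in Hk.
have Hk0 : k <> 0%N.
  move=> E; move: Hk; rewrite E /= => Hz.
  have : y = 0.
    rewrite -HPoly -Hz; apply/polyP => i; rewrite coef_Poly nth_nseq coef0.
    by case: ifP.
  by move=> Ey; move: Hxy; rewrite Ey mulr0 mod0p => /eqP; rewrite eq_sym oner_eq0.
pose init := init_config (Mach p) r f.
have claim : forall j, (exists c, reach r x init c /\ success r f x c) \/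
   (exists c, reach r x init c /\ Aconf r f (iter j (inc true) (nseq r 0)) c).
  elim=> [|j IH].
    right; exists init; split; first exact: reach_refl.
    exists false, 0, (fun _ => 0); split => //.
    split => //; split => //.
    move=> n Hn /=; split => //.
    by rewrite /Ys nth_nseq if_same.
  case: IH => [H|[c [Rc Ac]]]; first by left.
  have Hsz : size (iter j (inc true) (nseq r (0 : 'F_p))) = r by rewrite size_iter_inc size_nseq.
  have [H1 H2] := round Hr Hf Hfm Hx Hsz Ac.
  case: (boolP (x * Poly (inc true (iter j (inc true) (nseq r 0))) %% f == 1)) => E.
    by have [c' [R' S']] := H1 E; left; exists c'; split => //; apply: reach_trans Rc R'.
  by have [c' [R' S']] := H2 E; right; exists c'; split => //; apply: reach_trans Rc R'.
have : exists c, reach r x init c /\ success r f x c.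
  case: (claim k.-1) => // [[c [Rc Ac]]].
  have Hsz : size (iter k.-1 (inc true) (nseq r (0 : 'F_p))) = r by rewrite size_iter_inc size_nseq.
  have [H1 _] := round Hr Hf Hfm Hx Hsz Ac.
  have E : inc true (iter k.-1 (inc true) (nseq r 0)) = sstar.
    by rewrite -Hk -[in RHS](prednK (_ : 0 < k)%N) //; lia.
  have HE : x * Poly (inc true (iter k.-1 (inc true) (nseq r (0 : 'F_p)))) %% f == 1.
    by rewrite E HPoly Hxy.
  have [c' [R' S']] := H1 HE.
  by exists c'; split => //; apply: reach_trans Rc R'.
move=> [c [[t Ht] [Hst Hsz Hmod]]].
exists t, c, (fun _ => r.+2); split.
- by split => //; rewrite run_runc.
- by [].
- move=> s' c' _ Hrun j.
  have [Hle Hpos _] := Inv_runc Hr (Inv_init r f) (etrans (esym (run_runc r f x s')) Hrun).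
  by rewrite Hpos; lia.
- by move=> j _; lia.
- by rewrite sum_nat_const card_ord /=; lia.
Qed.
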